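(* Let $a>0$, $\alpha\in[0,1)$ and $f\in\mathcal C_a$. Then the function $\mathrm{Sh}_\alpha(f)$ is convex.
   Context: $\mathcal C_a$ is the set of $C^1$ functions $f:\mathbb R\to\mathbb R$ that are even, satisfy $f(s)=|s|$ for $|s|\ge a$ and are strictly convex on $[-a,a]$. For $f\in\mathcal C_a$: $F_\alpha(s)=f(s)-\alpha s$, $x_\alpha^+=(f')^{-1}(\alpha)\in[0,a)$ (inverse of $f':[-a,a]\to[-1,1]$); $F_\alpha$ decreases on $(-\infty,x_\alpha^+]$ and increases on $[x_\alpha^+,\infty)$. Let $F_\alpha^{-1}$ be the inverse of $F_\alpha|_{[x_\alpha^+,\infty)}$, $\phi=F_\alpha^{-1}\circ F_\alpha$, $\delta_x=(1-\alpha)^{-1}F_\alpha(x)-\phi(x)$, $s_\alpha=x_\alpha^++\delta_{x_\alpha^+}$; $x\mapsto x+\delta_x$ is an increasing bijection $(-\infty,x_\alpha^+]\to(-\infty,s_\alpha]$ with inverse $\tau$. Define $\mathrm{Sh}_\alpha(f)(x)=\alpha x+F_\alpha(\tau(x))$ for $x\le s_\alpha$ and $=x$ for $x>s_\alpha$. *)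

(* Defs.v *)
From Stdlib Require Import Reals ClassicalEpsilon.
From Coquelicot Require Import Coquelicot.
Open Scope R_scope.

Definition C1 (f : R -> R) : Prop :=
  (forall x, ex_derive f x) /\ (forall x, continuous (Derive f) x).

Definition strictly_convex_on (lo hi : R) (f : R -> R) : Prop :=
  forall x y t, lo <= x <= hi -> lo <= y <= hi -> x <> y -> 0 < t < 1 ->
    f (t * x + (1 - t) * y) < t * f x + (1 - t) * f y.

Definition convex_fun (g : R -> R) : Prop :=
  forall x y t, 0 <= t <= 1 ->
    g (t * x + (1 - t) * y) <= t * g x + (1 - t) * g y.

Definition class_C (a : R) (f : R -> R) : Prop :=
  C1 f /\ (forall s, f (- s) = f s) /\
  (forall s, a <= Rabs s -> f s = Rabs s) /\
  strictly_convex_on (- a) a f.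

Definition Fa (f : R -> R) (alpha s : R) : R := f s - alpha * s.

Definition xplus (a : R) (f : R -> R) (alpha : R) : R :=
  epsilon (inhabits 0) (fun x => - a <= x <= a /\ Derive f x = alpha).

Definition Fainv (a : R) (f : R -> R) (alpha y : R) : R :=
  epsilon (inhabits 0) (fun x => xplus a f alpha <= x /\ Fa f alpha x = y).

Definition phi (a : R) (f : R -> R) (alpha x : R) : R :=
  Fainv a f alpha (Fa f alpha x).

Definition delta (a : R) (f : R -> R) (alpha x : R) : R :=
  Fa f alpha x / (1 - alpha) - phi a f alpha x.

Definition s_alpha (a : R) (f : R -> R) (alpha : R) : R :=
  xplus a f alpha + delta a f alpha (xplus a f alpha).

(* tau: inverse of x |-> x + delta_x, (-oo, x_alpha^+] -> (-oo, s_alpha] *)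
Definition tau (a : R) (f : R -> R) (alpha y : R) : R :=
  epsilon (inhabits 0)
    (fun x => x <= xplus a f alpha /\ x + delta a f alpha x = y).

Definition Sh (a : R) (f : R -> R) (alpha x : R) : R :=
  if Rle_dec x (s_alpha a f alpha)
  then alpha * x + Fa f alpha (tau a f alpha x)
  else x.

(* Main.v *)
Require Import Defs.
From Stdlib Require Import Reals Lra ClassicalEpsilon.
From Coquelicot Require Import Coquelicot.
Open Scope R_scope.

Lemma cont_const (g : R -> R) x0 v : continuity_pt g x0 ->
  (forall e, 0 < e -> exists x, x <> x0 /\ Rabs (x - x0) < e /\ g x = v) ->
  g x0 = v.
Proof.
  intros Hc Hx.
  destruct (Req_dec (g x0) v) as [E|E]; auto.
  exfalso.
  assert (He : 0 < Rabs (g x0 - v)) by (apply Rabs_pos_lt; lra).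
  destruct (Hc _ He) as [alp [Ha Hd]].
  destruct (Hx alp Ha) as [x [Hne [Hlt Hg]]].
  assert (Hd' := Hd x). simpl in Hd'. unfold R_dist in Hd'.
  rewrite Hg in Hd'.
  assert (Rabs (v - g x0) < Rabs (g x0 - v)).
  { apply Hd'. split; [split; [exact I | auto] | exact Hlt]. }
  rewrite Rabs_minus_sym in H. lra.
Qed.

Lemma tangent (g : R -> R) p q D : derivable_pt_lim g p D -> p <> q ->
  (forall t, 0 < t < 1 -> g (p + t*(q-p)) <= g p + t*(g q - g p)) ->
  g p + D*(q-p) <= g q.
Proof.
  intros Hd Hpq Hc.
  destruct (Rle_lt_dec (g p + D*(q-p)) (g q)) as [L|L]; auto. exfalso.
  set (e := g p + D*(q-p) - g q).
  assert (He : 0 < e) by (unfold e; lra).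
  set (k := Rabs (q - p)).
  assert (Hk : 0 < k) by (unfold k; apply Rabs_pos_lt; lra).
  destruct (Hd (e / k)) as [del Hdel].
  { apply Rdiv_lt_0_compat; auto. }
  set (t := Rmin (1/2) (del / (2*k))).
  assert (Hdp : 0 < del) by apply cond_pos.
  assert (Ht0 : 0 < t).
  { unfold t; apply Rmin_pos; [lra|]. apply Rdiv_lt_0_compat; lra. }
  assert (Ht1 : t <= 1/2) by (unfold t; apply Rmin_l).
  assert (Ht2 : t <= del / (2*k)) by (unfold t; apply Rmin_r).
  set (h := t * (q - p)).
  assert (Hh : Rabs h = t * k).
  { unfold h, k. rewrite Rabs_mult, Rabs_pos_eq; lra. }
  assert (Hh0 : h <> 0).
  { intro E. assert (Rabs h = 0) by (rewrite E; apply Rabs_R0). nra. }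
  assert (Hhd : Rabs h < del).
  { rewrite Hh. assert (t * k <= del / 2).
    { apply Rle_trans with (del / (2*k) * k).
      - apply Rmult_le_compat_r; lra.
      - right. field. lra. }
    lra. }
  specialize (Hdel h Hh0 Hhd).
  set (Q := g (p + h) - g p - D * h).
  assert (EQ : (g (p + h) - g p) / h - D = Q / h) by (unfold Q; field; auto).
  rewrite EQ in Hdel. rewrite Rabs_div in Hdel by auto. rewrite Hh in Hdel.
  assert (HQ : Rabs Q < e * t).
  { apply Rmult_lt_compat_r with (r := t * k) in Hdel; [|nra].
    replace (Rabs Q / (t * k) * (t * k)) with (Rabs Q) in Hdel by (field; lra).
    replace (e / k * (t * k)) with (e * t) in Hdel by (field; lra). exact Hdel. }
  assert (HQ2 : Q <= - (e * t)).
  { unfold Q, h. specialize (Hc t ltac:(lra)). unfold e. nra. }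
  assert (Rabs Q >= e * t).
  { rewrite Rabs_left1 by nra. lra. }
  lra.
Qed.


Definition Hyp (a alpha : R) (f : R -> R) :=
  0 < a /\ 0 <= alpha < 1 /\ class_C a f.

Lemma f_right a al f : Hyp a al f -> forall s, a <= s -> f s = s.
Proof.
  intros [Ha [_ [_ [_ [Hr _]]]]] s Hs.
  rewrite Hr; rewrite Rabs_pos_eq; lra.
Qed.

Lemma f_left a al f : Hyp a al f -> forall s, s <= -a -> f s = - s.
Proof.
  intros [Ha [_ [_ [_ [Hr _]]]]] s Hs.
  rewrite Hr; rewrite Rabs_left; lra.
Qed.

Lemma f_der a al f : Hyp a al f -> forall x, derivable_pt_lim f x (Derive f x).
Proof.
  intros [_ [_ [[Hd _] _]]] x. apply is_derive_Reals. apply Derive_correct. apply Hd.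
Qed.

Lemma d_cont a al f : Hyp a al f -> forall x, continuity_pt (Derive f) x.
Proof.
  intros [_ [_ [[_ Hc] _]]] x. apply continuity_pt_filterlim. apply Hc.
Qed.

Lemma d_right a al f : Hyp a al f -> forall s, a < s -> Derive f s = 1.
Proof.
  intros H s Hs.
  rewrite (Derive_ext_loc f id s). { apply Derive_id. }
  apply filter_imp with (fun t => a < t).
  { intros t Ht. unfold id. apply (f_right a al f H); lra. }
  apply open_gt; auto.
Qed.

Lemma d_left a al f : Hyp a al f -> forall s, s < -a -> Derive f s = -1.
Proof.
  intros H s Hs.
  rewrite (Derive_ext_loc f (fun t => - id t) s).
  { rewrite Derive_opp, Derive_id; auto. }
  apply filter_imp with (fun t => t < -a).
  { intros t Ht. unfold id. apply (f_left a al f H); lra. }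
  apply open_lt; auto.
Qed.

Lemma d_a a al f : Hyp a al f -> Derive f a = 1.
Proof.
  intros H. apply cont_const. { apply (d_cont a al f H). }
  intros e He. exists (a + e/2). split; [lra|]. split.
  { rewrite Rabs_pos_eq; lra. }
  apply (d_right a al f H); lra.
Qed.

Lemma d_ma a al f : Hyp a al f -> Derive f (-a) = -1.
Proof.
  intros H. apply cont_const. { apply (d_cont a al f H). }
  intros e He. exists (-a - e/2). split; [lra|]. split.
  { rewrite Rabs_left; lra. }
  apply (d_left a al f H); lra.
Qed.

Lemma d_strict a al f : Hyp a al f -> forall p q, -a <= p -> p < q -> q <= a ->
  Derive f p < Derive f q.
Proof.
  intros H p q H1 H2 H3.
  destruct H as [Ha [Hal [HC [Hev [Hr Hs]]]]].
  assert (HH : Hyp a al f) by (split; [|split; [|split; [|split]]]; auto).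
  set (m := (p + q) / 2).
  assert (Tp := tangent f p m (Derive f p) (f_der a al f HH p) ltac:(unfold m; lra)).
  assert (Tq := tangent f q m (Derive f q) (f_der a al f HH q) ltac:(unfold m; lra)).
  assert (Sm : f m < 1/2 * f p + (1 - 1/2) * f q).
  { replace m with (1/2 * p + (1 - 1/2) * q) by (unfold m; field).
    apply Hs; lra. }
  assert (f p + Derive f p * (m - p) <= f m).
  { apply Tp. intros t Ht.
    replace (p + t * (m - p)) with (t * m + (1 - t) * p) by ring.
    assert (f (t * m + (1 - t) * p) < t * f m + (1 - t) * f p).
    { apply Hs; unfold m; lra. }
    lra. }
  assert (f q + Derive f q * (m - q) <= f m).
  { apply Tq. intros t Ht.
    replace (q + t * (m - q)) with (t * m + (1 - t) * q) by ring.
    assert (f (t * m + (1 - t) * q) < t * f m + (1 - t) * f q).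
    { apply Hs; unfold m; lra. }
    lra. }
  unfold m in *. nra.
Qed.

Lemma d_mono a al f : Hyp a al f -> forall s t, s <= t -> Derive f s <= Derive f t.
Proof.
  intros H s t Hst.
  assert (Ha : 0 < a) by apply H.
  assert (A1 := d_a a al f H). assert (A2 := d_ma a al f H).
  assert (S := d_strict a al f H).
  assert (R1 := d_right a al f H). assert (L1 := d_left a al f H).
  assert (Lo : forall u, -1 <= Derive f u).
  { intro u. destruct (Rlt_le_dec u (-a)). { rewrite (L1 u); lra. }
    destruct (Rlt_le_dec a u). { rewrite (R1 u); lra. }
    destruct (Req_dec u (-a)). { subst; lra. }
    left. rewrite <- A2. apply S; lra. }
  assert (Hi : forall u, Derive f u <= 1).
  { intro u. destruct (Rlt_le_dec u (-a)). { rewrite (L1 u); lra. }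
    destruct (Rlt_le_dec a u). { rewrite (R1 u); lra. }
    destruct (Req_dec u a). { subst; lra. }
    left. rewrite <- A1. apply S; lra. }
  destruct (Req_dec s t) as [E|E]; [subst; lra|].
  destruct (Rlt_le_dec s (-a)). { rewrite (L1 s) by lra. apply Lo. }
  destruct (Rlt_le_dec a t). { rewrite (R1 t) by lra. apply Hi. }
  left. apply S; lra.
Qed.

Lemma d_le1 a al f : Hyp a al f -> forall s, Derive f s <= 1.
Proof.
  intros H s. assert (Ha : 0 < a) by apply H.
  rewrite <- (d_right a al f H (Rabs s + a + 1)).
  - apply (d_mono a al f H). assert (s <= Rabs s) by apply RRle_abs. lra.
  - assert (0 <= Rabs s) by apply Rabs_pos. lra.
Qed.

Lemma xplus_spec a al f : Hyp a al f ->
  -a <= xplus a f al <= a /\ Derive f (xplus a f al) = al.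
Proof.
  intros H. assert (H' := H). destruct H' as [Ha [Hal _]].
  unfold xplus. apply epsilon_spec.
  assert (Hc : continuity (fun x => Derive f x - al)).
  { intro x. apply continuity_pt_minus.
    - apply (d_cont a al f H).
    - apply continuity_pt_const. intros u v; reflexivity. }
  destruct (IVT (fun x => Derive f x - al) (-a) a Hc) as [z [Hz Ez]].
  - lra.
  - rewrite (d_ma a al f H). lra.
  - rewrite (d_a a al f H). lra.
  - exists z. split; [lra|]. simpl in Ez. lra.
Qed.

Lemma d_lt a al f : Hyp a al f -> forall s, s < xplus a f al -> Derive f s < al.
Proof.
  intros H s Hs. destruct (xplus_spec a al f H) as [Hp Dp].
  assert (Hal : 0 <= al < 1) by apply H.
  destruct (Rlt_le_dec s (-a)).
  - rewrite (d_left a al f H s) by lra. lra.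
  - rewrite <- Dp. apply (d_strict a al f H); lra.
Qed.

Lemma d_gt a al f : Hyp a al f -> forall s, xplus a f al < s -> al < Derive f s.
Proof.
  intros H s Hs. destruct (xplus_spec a al f H) as [Hp Dp].
  assert (Hal : 0 <= al < 1) by apply H.
  destruct (Rlt_le_dec a s).
  - rewrite (d_right a al f H s) by lra. lra.
  - rewrite <- Dp. apply (d_strict a al f H); lra.
Qed.

Lemma F_der a al f : Hyp a al f -> forall x,
  derivable_pt_lim (Fa f al) x (Derive f x - al).
Proof.
  intros H x.
  assert (D2 : derivable_pt_lim (fun s => al * s) x al).
  { assert (D := derivable_pt_lim_scal id al x 1 (derivable_pt_lim_id x)).
    replace (al * 1) with al in D by ring. exact D. }
  exact (derivable_pt_lim_minus f (fun s => al * s) x _ _ (f_der a al f H x) D2).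
Qed.

Lemma F_mvt a al f : Hyp a al f -> forall s t, s < t ->
  exists c, s < c < t /\ Fa f al t - Fa f al s = (Derive f c - al) * (t - s).
Proof.
  intros H s t Hst.
  destruct (MVT_cor2 (Fa f al) (fun c => Derive f c - al) s t Hst) as [c [E Hc]].
  { intros c _. apply (F_der a al f H). }
  exists c; split; auto.
Qed.

Lemma F_dec a al f : Hyp a al f -> forall s t, s < t -> t <= xplus a f al ->
  Fa f al t < Fa f al s.
Proof.
  intros H s t Hst Ht.
  destruct (F_mvt a al f H s t Hst) as [c [Hc E]].
  assert (Derive f c < al) by (apply (d_lt a al f H); lra).
  nra.
Qed.

Lemma F_inc a al f : Hyp a al f -> forall s t, xplus a f al <= s -> s < t ->
  Fa f al s < Fa f al t.
Proof.
  intros H s t Hs Hst.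
  destruct (F_mvt a al f H s t Hst) as [c [Hc E]].
  assert (al < Derive f c) by (apply (d_gt a al f H); lra).
  nra.
Qed.

Lemma F_lip a al f : Hyp a al f -> forall s t, s <= t ->
  Fa f al t - Fa f al s <= (1 - al) * (t - s).
Proof.
  intros H s t Hst. destruct (Req_dec s t). { subst. lra. }
  destruct (F_mvt a al f H s t ltac:(lra)) as [c [Hc E]].
  assert (Derive f c <= 1) by apply (d_le1 a al f H).
  nra.
Qed.

Lemma F_min a al f : Hyp a al f -> forall s, Fa f al (xplus a f al) <= Fa f al s.
Proof.
  intros H s. destruct (Rtotal_order s (xplus a f al)) as [L|[E|G]].
  - left. apply (F_dec a al f H); lra.
  - subst; lra.
  - left. apply (F_inc a al f H); lra.
Qed.

Lemma F_cont a al f : Hyp a al f -> continuity (Fa f al).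
Proof.
  intros H x. apply derivable_continuous_pt.
  exists (Derive f x - al). apply (F_der a al f H).
Qed.

Lemma F_right a al f : Hyp a al f -> forall s, a <= s -> Fa f al s = (1 - al) * s.
Proof. intros H s Hs. unfold Fa. rewrite (f_right a al f H s Hs). ring. Qed.

Lemma F_left a al f : Hyp a al f -> forall s, s <= -a -> Fa f al s = - (1 + al) * s.
Proof. intros H s Hs. unfold Fa. rewrite (f_left a al f H s Hs). ring. Qed.

Lemma F_conv_lt a al f : Hyp a al f -> forall x y t, x < y -> 0 < t < 1 ->
  Fa f al (t * x + (1 - t) * y) <= t * Fa f al x + (1 - t) * Fa f al y.
Proof.
  intros H x y t Hxy Ht.
  set (z := t * x + (1 - t) * y).
  destruct (F_mvt a al f H x z ltac:(unfold z; nra)) as [c1 [H1 E1]].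
  destruct (F_mvt a al f H z y ltac:(unfold z; nra)) as [c2 [H2 E2]].
  assert (Derive f c1 <= Derive f c2) by (apply (d_mono a al f H); lra).
  assert (Ez1 : z - x = (1 - t) * (y - x)) by (unfold z; ring).
  assert (Ez2 : y - z = t * (y - x)) by (unfold z; ring).
  rewrite Ez1 in E1. rewrite Ez2 in E2.
  assert (0 <= t * (1 - t) * (y - x) * (Derive f c2 - Derive f c1)).
  { apply Rmult_le_pos; [|lra]. apply Rmult_le_pos; [|lra]. nra. }
  nra.
Qed.

Lemma F_convex a al f : Hyp a al f -> convex_fun (Fa f al).
Proof.
  intros H x y t Ht.
  destruct (Req_dec t 0). { subst. replace (0 * x + (1 - 0) * y) with y by ring. lra. }
  destruct (Req_dec t 1). { subst. replace (1 * x + (1 - 1) * y) with x by ring. lra. }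
  destruct (Rtotal_order x y) as [L|[E|G]].
  - apply (F_conv_lt a al f H); lra.
  - subst. replace (t * y + (1 - t) * y) with y by ring. lra.
  - replace (t * x + (1 - t) * y) with ((1 - t) * y + (1 - (1 - t)) * x) by ring.
    assert (Fa f al ((1 - t) * y + (1 - (1 - t)) * x) <=
            (1 - t) * Fa f al y + (1 - (1 - t)) * Fa f al x).
    { apply (F_conv_lt a al f H); lra. }
    lra.
Qed.

Definition Lft (a : R) (f : R -> R) (al c : R) : R :=
  epsilon (inhabits 0) (fun x => x <= xplus a f al /\ Fa f al x = c).

Lemma R_spec a al f : Hyp a al f -> forall c, Fa f al (xplus a f al) <= c ->
  xplus a f al <= Fainv a f al c /\ Fa f al (Fainv a f al c) = c.
Proof.
  intros H c Hc. assert (H' := H). destruct H' as [Ha [Hal _]].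
  destruct (xplus_spec a al f H) as [Hp _].
  unfold Fainv. apply epsilon_spec.
  destruct (Req_dec c (Fa f al (xplus a f al))) as [E|E].
  { exists (xplus a f al). split; lra. }
  set (M := Rmax a (c / (1 - al)) + 1).
  assert (HM0 : a + 1 <= M) by (unfold M; assert (W := Rmax_l a (c/(1-al))); lra).
  assert (HM1 : a <= M) by lra.
  assert (HM2 : c / (1 - al) < M) by (unfold M; assert (W := Rmax_r a (c/(1-al))); lra).
  assert (Hcont : continuity (fun x => Fa f al x - c)).
  { intro x. apply continuity_pt_minus. apply (F_cont a al f H).
    apply continuity_pt_const. intros u v; reflexivity. }
  destruct (IVT (fun x => Fa f al x - c) (xplus a f al) M Hcont) as [z [Hz Ez]].
  - lra.
  - cbv beta; lra.
  - cbv beta; rewrite (F_right a al f H M HM1).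
    assert (c < (1 - al) * M).
    { apply Rmult_lt_compat_l with (r := 1 - al) in HM2; [|lra].
      replace ((1 - al) * (c / (1 - al))) with c in HM2 by (field; lra). lra. }
    lra.
  - exists z. split; [lra|]. simpl in Ez. lra.
Qed.

Lemma R_uniq a al f : Hyp a al f -> forall c z, xplus a f al <= z -> Fa f al z = c ->
  z = Fainv a f al c.
Proof.
  intros H c z Hz E.
  assert (Hm : Fa f al (xplus a f al) <= c) by (rewrite <- E; apply (F_min a al f H)).
  destruct (R_spec a al f H c Hm) as [H1 H2].
  destruct (Rtotal_order z (Fainv a f al c)) as [L|[Q|G]]; auto.
  - assert (Fa f al z < Fa f al (Fainv a f al c)) by (apply (F_inc a al f H); lra). lra.
  - assert (Fa f al (Fainv a f al c) < Fa f al z) by (apply (F_inc a al f H); lra). lra.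
Qed.

Lemma L_spec a al f : Hyp a al f -> forall c, Fa f al (xplus a f al) <= c ->
  Lft a f al c <= xplus a f al /\ Fa f al (Lft a f al c) = c.
Proof.
  intros H c Hc. assert (H' := H). destruct H' as [Ha [Hal _]].
  destruct (xplus_spec a al f H) as [Hp _].
  unfold Lft. apply epsilon_spec.
  destruct (Req_dec c (Fa f al (xplus a f al))) as [E|E].
  { exists (xplus a f al). split; lra. }
  set (M := Rmin (-a) (- (c / (1 + al))) - 1).
  assert (HM0 : M <= -a - 1) by (unfold M; assert (W := Rmin_l (-a) (-(c/(1+al)))); lra).
  assert (HM1 : M <= -a) by lra.
  assert (HM2 : M < - (c / (1 + al))) by (unfold M; assert (W := Rmin_r (-a) (-(c/(1+al)))); lra).
  assert (Hcont : continuity (fun x => c - Fa f al x)).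
  { intro x. apply continuity_pt_minus.
    apply continuity_pt_const. intros u v; reflexivity. apply (F_cont a al f H). }
  destruct (IVT (fun x => c - Fa f al x) M (xplus a f al) Hcont) as [z [Hz Ez]].
  - lra.
  - cbv beta; rewrite (F_left a al f H M HM1).
    assert (c < - (1 + al) * M).
    { assert (c / (1 + al) < - M) by lra.
      apply Rmult_lt_compat_l with (r := 1 + al) in H0; [|lra].
      replace ((1 + al) * (c / (1 + al))) with c in H0 by (field; lra). lra. }
    lra.
  - cbv beta; lra.
  - exists z. split; [lra|]. simpl in Ez. lra.
Qed.

Lemma L_uniq a al f : Hyp a al f -> forall c z, z <= xplus a f al -> Fa f al z = c ->
  z = Lft a f al c.
Proof.
  intros H c z Hz E.
  assert (Hm : Fa f al (xplus a f al) <= c) by (rewrite <- E; apply (F_min a al f H)).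
  destruct (L_spec a al f H c Hm) as [H1 H2].
  destruct (Rtotal_order z (Lft a f al c)) as [L|[Q|G]]; auto.
  - assert (Fa f al (Lft a f al c) < Fa f al z) by (apply (F_dec a al f H); lra). lra.
  - assert (Fa f al z < Fa f al (Lft a f al c)) by (apply (F_dec a al f H); lra). lra.
Qed.

Definition hh a f al c := c / (1 - al) - Fainv a f al c + Lft a f al c.

Lemma R_mono a al f : Hyp a al f -> forall c1 c2,
  Fa f al (xplus a f al) <= c1 -> c1 < c2 ->
  (c2 - c1) / (1 - al) <= Fainv a f al c2 - Fainv a f al c1.
Proof.
  intros H c1 c2 H1 H12. assert (Hal : 0 <= al < 1) by apply H.
  destruct (R_spec a al f H c1 H1) as [A1 B1].
  destruct (R_spec a al f H c2 ltac:(lra)) as [A2 B2].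
  assert (Lt : Fainv a f al c1 < Fainv a f al c2).
  { destruct (Rtotal_order (Fainv a f al c1) (Fainv a f al c2)) as [L|[Q|G]]; auto.
    - rewrite Q in B1. lra.
    - assert (Fa f al (Fainv a f al c2) < Fa f al (Fainv a f al c1))
        by (apply (F_inc a al f H); lra). lra. }
  assert (W := F_lip a al f H _ _ (Rlt_le _ _ Lt)). rewrite B1, B2 in W.
  apply Rmult_le_reg_l with (r := 1 - al); [lra|].
  replace ((1 - al) * ((c2 - c1) / (1 - al))) with (c2 - c1) by (field; lra). lra.
Qed.

Lemma L_mono a al f : Hyp a al f -> forall c1 c2,
  Fa f al (xplus a f al) <= c1 -> c1 < c2 -> Lft a f al c2 < Lft a f al c1.
Proof.
  intros H c1 c2 H1 H12.
  destruct (L_spec a al f H c1 H1) as [A1 B1].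
  destruct (L_spec a al f H c2 ltac:(lra)) as [A2 B2].
  destruct (Rtotal_order (Lft a f al c2) (Lft a f al c1)) as [L|[Q|G]]; auto.
  - rewrite Q in B2. lra.
  - assert (Fa f al (Lft a f al c2) < Fa f al (Lft a f al c1))
      by (apply (F_dec a al f H); lra). lra.
Qed.

Lemma h_strict a al f : Hyp a al f -> forall c1 c2,
  Fa f al (xplus a f al) <= c1 -> c1 < c2 -> hh a f al c2 < hh a f al c1.
Proof.
  intros H c1 c2 H1 H12. assert (Hal : 0 <= al < 1) by apply H.
  assert (A := R_mono a al f H c1 c2 H1 H12).
  assert (B := L_mono a al f H c1 c2 H1 H12).
  unfold hh.
  assert (E : c2 / (1 - al) - c1 / (1 - al) = (c2 - c1) / (1 - al)) by (field; lra).
  lra.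
Qed.

Lemma R_concave a al f : Hyp a al f -> forall c1 c2 t,
  Fa f al (xplus a f al) <= c1 -> Fa f al (xplus a f al) <= c2 -> 0 <= t <= 1 ->
  t * Fainv a f al c1 + (1 - t) * Fainv a f al c2 <= Fainv a f al (t * c1 + (1 - t) * c2).
Proof.
  intros H c1 c2 t H1 H2 Ht.
  set (c := t * c1 + (1 - t) * c2).
  assert (Hc : Fa f al (xplus a f al) <= c) by (unfold c; nra).
  destruct (R_spec a al f H c1 H1) as [A1 B1].
  destruct (R_spec a al f H c2 H2) as [A2 B2].
  destruct (R_spec a al f H c Hc) as [A B].
  set (z := t * Fainv a f al c1 + (1 - t) * Fainv a f al c2).
  assert (Hz : xplus a f al <= z) by (unfold z; nra).
  assert (Fz : Fa f al z <= c).
  { assert (W := F_convex a al f H (Fainv a f al c1) (Fainv a f al c2) t Ht).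
    rewrite B1, B2 in W. exact W. }
  destruct (Rle_lt_dec z (Fainv a f al c)); auto.
  assert (Fa f al (Fainv a f al c) < Fa f al z) by (apply (F_inc a al f H); lra). lra.
Qed.

Lemma L_convex a al f : Hyp a al f -> forall c1 c2 t,
  Fa f al (xplus a f al) <= c1 -> Fa f al (xplus a f al) <= c2 -> 0 <= t <= 1 ->
  Lft a f al (t * c1 + (1 - t) * c2) <= t * Lft a f al c1 + (1 - t) * Lft a f al c2.
Proof.
  intros H c1 c2 t H1 H2 Ht.
  set (c := t * c1 + (1 - t) * c2).
  assert (Hc : Fa f al (xplus a f al) <= c) by (unfold c; nra).
  destruct (L_spec a al f H c1 H1) as [A1 B1].
  destruct (L_spec a al f H c2 H2) as [A2 B2].
  destruct (L_spec a al f H c Hc) as [A B].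
  set (z := t * Lft a f al c1 + (1 - t) * Lft a f al c2).
  assert (Hz : z <= xplus a f al) by (unfold z; nra).
  assert (Fz : Fa f al z <= c).
  { assert (W := F_convex a al f H (Lft a f al c1) (Lft a f al c2) t Ht).
    rewrite B1, B2 in W. exact W. }
  destruct (Rle_lt_dec (Lft a f al c) z); auto.
  assert (Fa f al (Lft a f al c) < Fa f al z) by (apply (F_dec a al f H); lra). lra.
Qed.

Lemma h_convex a al f : Hyp a al f -> forall c1 c2 t,
  Fa f al (xplus a f al) <= c1 -> Fa f al (xplus a f al) <= c2 -> 0 <= t <= 1 ->
  hh a f al (t * c1 + (1 - t) * c2) <= t * hh a f al c1 + (1 - t) * hh a f al c2.
Proof.
  intros H c1 c2 t H1 H2 Ht. assert (Hal : 0 <= al < 1) by apply H.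
  assert (A := R_concave a al f H c1 c2 t H1 H2 Ht).
  assert (B := L_convex a al f H c1 c2 t H1 H2 Ht).
  unfold hh.
  assert (E : (t * c1 + (1 - t) * c2) / (1 - al) =
              t * (c1 / (1 - al)) + (1 - t) * (c2 / (1 - al))) by (field; lra).
  rewrite E. lra.
Qed.

Lemma R_lt1 a al f : Hyp a al f -> forall c z,
  Fa f al (xplus a f al) <= c -> xplus a f al <= z -> c < Fa f al z -> Fainv a f al c < z.
Proof.
  intros H c z Hc Hz Hlt. destruct (R_spec a al f H c Hc) as [A B].
  destruct (Rlt_le_dec (Fainv a f al c) z) as [L|L]; auto.
  destruct (Req_dec (Fainv a f al c) z) as [E|E]. { rewrite E in B. lra. }
  assert (Fa f al z < Fa f al (Fainv a f al c)) by (apply (F_inc a al f H); lra). lra.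
Qed.

Lemma R_lt2 a al f : Hyp a al f -> forall c z,
  Fa f al (xplus a f al) <= c -> xplus a f al <= z -> Fa f al z < c -> z < Fainv a f al c.
Proof.
  intros H c z Hc Hz Hlt. destruct (R_spec a al f H c Hc) as [A B].
  destruct (Rlt_le_dec z (Fainv a f al c)) as [L|L]; auto.
  destruct (Req_dec (Fainv a f al c) z) as [E|E]. { rewrite E in B. lra. }
  assert (Fa f al (Fainv a f al c) < Fa f al z) by (apply (F_inc a al f H); lra). lra.
Qed.

Lemma Rp_cont a al f : Hyp a al f ->
  continuity (fun c => Fainv a f al (Rmax (Fa f al (xplus a f al)) c)).
Proof.
  intros H c0. set (p := xplus a f al). set (m := Fa f al p).
  unfold continuity_pt, continue_in, limit1_in, limit_in.
  intros eps Heps. simpl. unfold R_dist.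
  set (c0' := Rmax m c0).
  assert (Hc0' : m <= c0') by apply Rmax_l.
  assert (Hc0 : c0 <= c0') by apply Rmax_r.
  destruct (R_spec a al f H c0' Hc0') as [A0 B0]. fold p in A0.
  set (z0 := Fainv a f al c0') in *.
  set (d1 := Fa f al (z0 + eps) - c0').
  assert (Hd1 : 0 < d1).
  { unfold d1. rewrite <- B0. assert (Fa f al z0 < Fa f al (z0 + eps)).
    { apply (F_inc a al f H); unfold p in A0; lra. } lra. }
  assert (Up : forall c, c < c0 + d1 -> Fainv a f al (Rmax m c) < z0 + eps).
  { intros c Hc. apply (R_lt1 a al f H). apply Rmax_l. fold p; lra.
    apply Rmax_lub_lt. unfold d1 in Hd1; lra. unfold d1 in Hc; lra. }
  assert (Lo0 : forall c, p <= Fainv a f al (Rmax m c)).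
  { intros c. apply (R_spec a al f H). apply Rmax_l. }
  destruct (Rlt_le_dec (z0 - eps) p) as [Hl|Hl].
  - exists d1. split; [lra|]. intros c [_ Hc].
    apply Rabs_def2 in Hc. specialize (Up c ltac:(lra)). specialize (Lo0 c).
    apply Rabs_def1; lra.
  - assert (Hz0 : p < z0) by lra.
    assert (Em : m < c0').
    { destruct Hc0' as [L|E]; auto. exfalso.
      assert (Fa f al p < Fa f al z0) by (apply (F_inc a al f H); unfold p in *; lra).
      unfold m in E. lra. }
    assert (Ec : c0' = c0).
    { unfold c0'. unfold Rmax. destruct (Rle_dec m c0); auto. unfold c0' in Em.
      unfold Rmax in Em. destruct (Rle_dec m c0); lra. }
    set (d2 := c0' - Fa f al (z0 - eps)).
    assert (Hd2 : 0 < d2).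
    { unfold d2. rewrite <- B0. assert (Fa f al (z0 - eps) < Fa f al z0).
      { apply (F_inc a al f H); unfold p in *; lra. } lra. }
    exists (Rmin d1 d2). split. { apply Rmin_pos; auto. }
    intros c [_ Hc]. apply Rabs_def2 in Hc.
    assert (W1 := Rmin_l d1 d2). assert (W2 := Rmin_r d1 d2).
    specialize (Up c ltac:(lra)).
    assert (Lo : z0 - eps < Fainv a f al (Rmax m c)).
    { apply (R_lt2 a al f H). apply Rmax_l. fold p; lra.
      assert (W3 := Rmax_r m c). unfold d2 in *. lra. }
    apply Rabs_def1; lra.
Qed.

Lemma delta_eq a al f y :
  delta a f al y = Fa f al y / (1 - al) - Fainv a f al (Fa f al y).
Proof. reflexivity. Qed.

Lemma s_alpha_eq a al f : Hyp a al f ->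
  s_alpha a f al = Fa f al (xplus a f al) / (1 - al).
Proof.
  intros H. unfold s_alpha. rewrite delta_eq.
  rewrite <- (R_uniq a al f H (Fa f al (xplus a f al)) (xplus a f al)); auto; [ring|lra].
Qed.

Lemma T_left a al f : Hyp a al f -> forall y, y <= -a -> y + delta a f al y = y.
Proof.
  intros H y Hy. assert (H' := H). destruct H' as [Ha [Hal _]].
  destruct (xplus_spec a al f H) as [Hp _].
  rewrite delta_eq.
  set (z := Fa f al y / (1 - al)).
  assert (Ey : Fa f al y = - (1 + al) * y) by apply (F_left a al f H y Hy).
  assert (Hz : a <= z).
  { unfold z. rewrite Ey. apply Rmult_le_reg_l with (r := 1 - al); [lra|].
    replace ((1 - al) * (- (1 + al) * y / (1 - al))) with (- (1 + al) * y) by (field; lra).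
    nra. }
  assert (Fz : Fa f al z = Fa f al y).
  { rewrite (F_right a al f H z Hz). unfold z. field. lra. }
  rewrite <- (R_uniq a al f H (Fa f al y) z); [|lra|auto].
  fold z. ring.
Qed.

Lemma tau_spec a al f : Hyp a al f -> forall x, x <= s_alpha a f al ->
  tau a f al x <= xplus a f al /\ tau a f al x + delta a f al (tau a f al x) = x.
Proof.
  intros H x Hx. assert (H' := H). destruct H' as [Ha [Hal _]].
  destruct (xplus_spec a al f H) as [Hp _].
  unfold tau. apply epsilon_spec.
  destruct (Req_dec x (s_alpha a f al)) as [E|E].
  { exists (xplus a f al). split; [lra|]. rewrite E. reflexivity. }
  set (m := Fa f al (xplus a f al)).
  set (g := fun y => y + Fa f al y / (1 - al) - Fainv a f al (Rmax m (Fa f al y)) - x).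
  assert (Eg : forall y, g y = y + delta a f al y - x).
  { intro y. unfold g. rewrite delta_eq. rewrite Rmax_right. ring.
    apply (F_min a al f H). }
  assert (Hg : continuity g).
  { intro y. unfold g.
    apply continuity_pt_minus; [|apply continuity_pt_const; intros u v; reflexivity].
    apply continuity_pt_minus.
    - apply continuity_pt_plus. apply continuity_pt_id.
      apply continuity_pt_mult. apply (F_cont a al f H).
      apply continuity_pt_const; intros u v; reflexivity.
    - apply (continuity_pt_comp (Fa f al) (fun c => Fainv a f al (Rmax m c))).
      apply (F_cont a al f H). apply (Rp_cont a al f H). }
  set (Y := Rmin x (-a) - 1).
  assert (HY0 : Y <= -a - 1) by (unfold Y; assert (W := Rmin_r x (-a)); lra).
  assert (HY : Y <= -a) by lra.
  assert (HYx : Y < x) by (unfold Y; assert (W := Rmin_l x (-a)); lra).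
  destruct (IVT g Y (xplus a f al) Hg) as [z [Hz Ez]].
  - lra.
  - rewrite Eg, (T_left a al f H Y HY). lra.
  - rewrite Eg. fold (s_alpha a f al). lra.
  - exists z. split; [lra|]. rewrite Eg in Ez. lra.
Qed.

Definition KK a f al x :=
  if Rle_dec x (s_alpha a f al) then Fa f al (tau a f al x) else Fa f al (xplus a f al).

Lemma h_m a al f : Hyp a al f ->
  hh a f al (Fa f al (xplus a f al)) = s_alpha a f al.
Proof.
  intros H. rewrite (s_alpha_eq a al f H). unfold hh.
  rewrite <- (R_uniq a al f H _ (xplus a f al)); [|lra|auto].
  rewrite <- (L_uniq a al f H _ (xplus a f al)); [ring|lra|auto].
Qed.

Lemma K1 a al f : Hyp a al f -> forall x,
  Fa f al (xplus a f al) <= KK a f al x /\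
  (x <= s_alpha a f al -> hh a f al (KK a f al x) = x) /\
  hh a f al (KK a f al x) <= x.
Proof.
  intros H x. unfold KK. destruct (Rle_dec x (s_alpha a f al)) as [Hx|Hx].
  - destruct (tau_spec a al f H x Hx) as [A B].
    set (y := tau a f al x) in *.
    assert (E : hh a f al (Fa f al y) = x).
    { unfold hh. rewrite <- (L_uniq a al f H _ y); auto.
      rewrite <- B. rewrite delta_eq. ring. }
    split; [apply (F_min a al f H)|]. split; [auto|]. lra.
  - rewrite (h_m a al f H). split; [lra|]. split; [intro; lra|]. lra.
Qed.

Lemma K2 a al f : Hyp a al f -> forall x c,
  Fa f al (xplus a f al) <= c -> hh a f al c <= x -> KK a f al x <= c.
Proof.
  intros H x c Hc Hh.
  destruct (K1 a al f H x) as [A [B C]].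
  destruct (Rle_dec x (s_alpha a f al)) as [Hx|Hx].
  - specialize (B Hx).
    destruct (Rle_lt_dec (KK a f al x) c) as [L|L]; auto.
    assert (hh a f al (KK a f al x) < hh a f al c) by (apply (h_strict a al f H); auto).
    lra.
  - unfold KK. destruct (Rle_dec x (s_alpha a f al)); [contradiction|]. auto.
Qed.

Lemma K_convex a al f : Hyp a al f -> convex_fun (KK a f al).
Proof.
  intros H x y t Ht.
  destruct (K1 a al f H x) as [A1 [_ C1]].
  destruct (K1 a al f H y) as [A2 [_ C2]].
  apply (K2 a al f H).
  - nra.
  - assert (W := h_convex a al f H _ _ t A1 A2 Ht). nra.
Qed.

Lemma convex_max (g1 g2 : R -> R) : convex_fun g1 -> convex_fun g2 ->
  convex_fun (fun x => Rmax (g1 x) (g2 x)).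
Proof.
  intros H1 H2 x y t Ht.
  assert (A := H1 x y t Ht). assert (B := H2 x y t Ht).
  assert (W1 := Rmax_l (g1 x) (g2 x)). assert (W2 := Rmax_r (g1 x) (g2 x)).
  assert (W3 := Rmax_l (g1 y) (g2 y)). assert (W4 := Rmax_r (g1 y) (g2 y)).
  apply Rmax_lub; nra.
Qed.

Lemma convex_lin_add (al : R) (g : R -> R) : convex_fun g ->
  convex_fun (fun x => al * x + g x).
Proof.
  intros Hg x y t Ht. assert (A := Hg x y t Ht). nra.
Qed.

Lemma convex_lin (b : R) : convex_fun (fun x => b * x).
Proof. intros x y t Ht. nra. Qed.

Lemma convex_ext (g1 g2 : R -> R) : (forall x, g1 x = g2 x) -> convex_fun g1 -> convex_fun g2.
Proof. intros E H x y t Ht. rewrite <- !E. apply H; auto. Qed.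

Lemma Sh_eq a al f : Hyp a al f -> forall x,
  al * x + Rmax (KK a f al x) ((1 - al) * x) = Sh a f al x.
Proof.
  intros H x. assert (Hal : 0 <= al < 1) by apply H.
  assert (Es := s_alpha_eq a al f H).
  assert (Es' : (1 - al) * s_alpha a f al = Fa f al (xplus a f al)) by (rewrite Es; field; lra).
  destruct (K1 a al f H x) as [A _].
  unfold Sh. revert A. unfold KK.
  destruct (Rle_dec x (s_alpha a f al)) as [Hx|Hx]; intro A.
  - rewrite Rmax_left; [unfold Fa; ring|]. nra.
  - rewrite Rmax_right; [ring|]. nra.
Qed.

Theorem corollary4p14 (a alpha : R) (f : R -> R) :
  0 < a -> 0 <= alpha < 1 -> class_C a f ->
  convex_fun (Sh a f alpha).
Proof.
  intros Ha Hal Hf.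
  assert (H : Hyp a alpha f) by (split; [|split]; auto).
  apply (convex_ext (fun x => alpha * x + Rmax (KK a f alpha x) ((1 - alpha) * x))).
  { apply (Sh_eq a alpha f H). }
  apply convex_lin_add. apply convex_max.
  - apply (K_convex a alpha f H).
  - apply convex_lin.
Qed.
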